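(* Let $p(t)=\sum_{k=0}^\infty a_kt^k$ be a real power series with $-1<a_i<1$ for all $i\ge0$ and $\sum_{i=0}^\infty|a_i|\le1$, and let $p^{[1]}=p$, $p^{[n+1]}=p(p^{[n]})$, $p^{[n]}(t)=\sum_k a_k^{[n]}t^k$. If $\lim_{n\to\infty}p^{[n]}(0)=\lim_{n\to\infty}a_0^{[n]}=a$ exists, then $\lim_{n\to\infty}p^{[n]}(t)=a$ for every $t\in(-1,1)$. *)

(* Defs.v *)
From Stdlib Require Import Reals.
From Coquelicot Require Import Coquelicot.
Open Scope R_scope.

Definition pseries_fun (a : nat -> R) (t : R) : R :=
  Series (fun k => a k * t ^ k).

Definition piter (a : nat -> R) (n : nat) : R -> R :=
  Nat.iter n (pseries_fun a).

(* Main.v *)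
Require Import Defs.
From Stdlib Require Import Reals.
From Coquelicot Require Import Coquelicot.
From Stdlib Require Import Lra Lia Classical.
Open Scope R_scope.

Lemma ln_le_sub1 (y : R) : 0 < y -> ln y <= y - 1.
Proof.
  intros Hy. pose proof (exp_ineq1_le (ln y)). rewrite exp_ln in H; lra.
Qed.

Lemma mln_bounds (s : R) : 0 <= s < 1 -> s <= - ln (1 - s) <= s / (1 - s).
Proof.
  intros Hs. split.
  - pose proof (ln_le_sub1 (1 - s)). lra.
  - assert (H1 : 0 < / (1 - s)) by (apply Rinv_0_lt_compat; lra).
    pose proof (ln_le_sub1 _ H1). rewrite ln_Rinv in H by lra.
    replace (s / (1 - s)) with (/ (1 - s) - 1) by (field; lra). lra.
Qed.

Definition Dm (u : R) : R := if Rle_dec 0 u then - ln (1 - u) else ln (1 + u).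

Lemma Dm_abs (u : R) : -1 < u < 1 -> Rabs (Dm u) = - ln (1 - Rabs u).
Proof.
  intros Hu. unfold Dm. destruct (Rle_dec 0 u).
  - rewrite (Rabs_pos_eq u) by lra. pose proof (mln_bounds u ltac:(lra)). rewrite Rabs_pos_eq; lra.
  - rewrite (Rabs_left u) by lra. pose proof (mln_bounds (-u) ltac:(lra)).
    replace (1 - - u) with (1 + u) in * by ring. rewrite Rabs_left1; lra.
Qed.

Lemma Dm_pos (u : R) : -1 < u < 1 -> 0 < Dm u -> 0 < u.
Proof.
  intros Hu. unfold Dm. destruct (Rle_dec 0 u).
  - intros H. destruct (Req_dec u 0); [|lra]. subst. replace (1-0) with 1 in H by ring.
    rewrite ln_1 in H. lra.
  - pose proof (mln_bounds (-u) ltac:(lra)). replace (1 - - u) with (1 + u) in H by ring. lra.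
Qed.

Lemma Dm_neg (u : R) : -1 < u < 1 -> Dm u < 0 -> u < 0.
Proof.
  intros Hu. unfold Dm. destruct (Rle_dec 0 u).
  - pose proof (mln_bounds u ltac:(lra)). lra.
  - lra.
Qed.

Lemma Dm_deriv (u : R) : -1 < u < 1 -> is_derive Dm u (/ (1 - Rabs u)).
Proof.
  intros Hu. destruct (Rtotal_order u 0) as [Hlt|[Heq|Hgt]].
  - apply is_derive_ext_loc with (f := fun y => ln (1 + y)).
    + exists (mkposreal (- u) ltac:(lra)). intros y Hy.
      unfold ball in Hy; simpl in Hy; unfold AbsRing_ball, abs, minus, plus, opp in Hy; simpl in Hy.
      apply Rabs_lt_between in Hy. unfold Dm. destruct (Rle_dec 0 y); [lra| reflexivity].
    + rewrite Rabs_left by lra. auto_derive. lra. field. lra.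
  - subst. apply is_derive_Reals. intros eps Heps.
    exists (mkposreal (Rmin (1/2) (eps/2)) ltac:(apply Rmin_pos; lra)).
    intros h Hh0 Hh. simpl in Hh. rewrite Rabs_R0. replace (0 + h) with h by ring.
    assert (Hd0 : Dm 0 = 0). { unfold Dm. destruct (Rle_dec 0 0); [|lra].
      replace (1-0) with 1 by ring. rewrite ln_1. ring. }
    rewrite Hd0. replace (1 - 0) with 1 by ring.
    assert (Hh1 : Rabs h < 1/2) by (apply Rlt_le_trans with (1 := Hh); apply Rmin_l).
    assert (Hh2 : Rabs h < eps/2) by (apply Rlt_le_trans with (1 := Hh); apply Rmin_r).
    assert (Hq : Dm h / h = (- ln (1 - Rabs h)) / Rabs h).
    { unfold Dm. destruct (Rle_dec 0 h).
      - rewrite Rabs_pos_eq by lra. reflexivity.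
      - rewrite Rabs_left by lra. replace (1 - - h) with (1 + h) by ring. field. lra. }
    replace ((Dm h - 0) / h) with (Dm h / h) by (field; auto).
    rewrite Hq. assert (Ha : 0 < Rabs h) by (apply Rabs_pos_lt; auto).
    pose proof (mln_bounds (Rabs h) ltac:(lra)) as [B1 B2].
    assert (1 <= - ln (1 - Rabs h) / Rabs h).
    { apply Rmult_le_reg_r with (Rabs h); auto. unfold Rdiv. rewrite Rmult_assoc, Rinv_l by lra. lra. }
    assert (- ln (1 - Rabs h) / Rabs h <= / (1 - Rabs h)).
    { apply Rmult_le_reg_r with (Rabs h); auto. unfold Rdiv. rewrite Rmult_assoc, Rinv_l by lra.
      replace (/ (1 - Rabs h) * Rabs h) with (Rabs h / (1 - Rabs h)) by (field; lra). lra. }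
    assert (/ (1 - Rabs h) <= 1 + 2 * Rabs h).
    { apply Rmult_le_reg_r with (1 - Rabs h); [lra|]. rewrite Rinv_l by lra. nra. }
    rewrite Rabs_pos_eq by lra. lra.
  - apply is_derive_ext_loc with (f := fun y => - ln (1 - y)).
    + exists (mkposreal u ltac:(lra)). intros y Hy.
      unfold ball in Hy; simpl in Hy; unfold AbsRing_ball, abs, minus, plus, opp in Hy; simpl in Hy.
      apply Rabs_lt_between in Hy. unfold Dm. destruct (Rle_dec 0 y); [reflexivity|lra].
    + rewrite Rabs_pos_eq by lra. auto_derive. lra. field. lra.
Qed.

Lemma pow_le1 (r : R) (n : nat) : 0 <= r <= 1 -> 0 <= r ^ n <= 1.
Proof.
  intros Hr. induction n; simpl; [lra|]. nra.
Qed.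

Lemma gap_term (r : R) (n : nat) : 0 <= r <= 1 ->
  0 <= 1 - r ^ (S n) - INR (S n) * r ^ n * (1 - r) /\
  ((1 <= n)%nat -> (1 - r) ^ 2 <= 1 - r ^ (S n) - INR (S n) * r ^ n * (1 - r)).
Proof.
  intros Hr. induction n.
  - simpl. split; [lra|]. intros H; lia.
  - destruct IHn as [I1 I2].
    assert (Heq : 1 - r ^ S (S n) - INR (S (S n)) * r ^ S n * (1 - r)
                 = (1 - r ^ (S n) - INR (S n) * r ^ n * (1 - r)) + INR (S n) * (1 - r) ^ 2 * r ^ n).
    { rewrite (S_INR (S n)). simpl. ring. }
    rewrite Heq. pose proof (pow_le1 r n Hr). pose proof (pos_INR (S n)).
    assert (0 <= INR (S n) * (1 - r) ^ 2 * r ^ n).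
    { apply Rmult_le_pos; [apply Rmult_le_pos|]; try lra. nra. }
    split; [lra|]. intros _. destruct n.
    + simpl. simpl in H1. nra.
    + specialize (I2 ltac:(lia)). lra.
Qed.

Lemma series_ge_term (e : nat -> R) (N : nat) :
  (forall n, 0 <= e n) -> ex_series e -> e N <= Series e.
Proof.
  intros Hp Hex. rewrite (Series_incr_n e (S N)) by (auto; lia). simpl pred.
  assert (e N <= sum_f_R0 e N).
  { destruct N; simpl; [lra|]. pose proof (cond_pos_sum e N Hp). lra. }
  assert (0 <= Series (fun k => e (S N + k)%nat)).
  { assert (Hz : Series (fun _ : nat => 0) = 0).
    { transitivity (Series (fun n : nat => 0 * (fun _ : nat => 1) n)); [apply Series_ext; intros; ring|].
      rewrite (Series_scal_l 0 (fun _ => 1)). ring. }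
    rewrite <- Hz. apply Series_le. intros; split; [lra|auto]. apply ex_series_incr_n. auto. }
  lra.
Qed.

Lemma rad1 (c : nat -> R) : (forall k, Rabs (c k) <= 1) -> Rbar_le 1 (CV_radius c).
Proof.
  intros Hc. destruct (CV_radius_bounded c) as [Hub _]. apply Hub.
  exists 1. intros n. rewrite pow1, Rmult_1_r. auto.
Qed.

Lemma inrad (c : nat -> R) (x : R) : (forall k, Rabs (c k) <= 1) -> Rabs x < 1 ->
  Rbar_lt (Rabs x) (CV_radius c).
Proof.
  intros Hc Hx. apply Rbar_lt_le_trans with (Finite 1); [exact Hx|]. apply rad1; auto.
Qed.

Section KIsec.
Variable a : nat -> R.
Hypothesis Ha : forall i, -1 < a i < 1.
Hypothesis Hsum : ex_series (fun i => Rabs (a i)).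
Hypothesis Hle : Series (fun i => Rabs (a i)) <= 1.

Let b := fun k => Rabs (a k).

Lemma Hab : forall k, Rabs (a k) <= 1.
Proof. intros k. specialize (Ha k). apply Rabs_le; lra. Qed.

Lemma KI (u R0 : R) (m : nat) : (2 <= m)%nat -> Rabs u <= R0 -> R0 < 1 ->
  0 < 1 - Rabs (PSeries a u) /\
  Rabs (PSeries (PS_derive a) u) * (1 - Rabs u) + Rabs (a m) * (1 - R0) ^ 2
    <= 1 - Rabs (PSeries a u).
Proof.
  intros Hm Hu HR.
  set (r := Rabs u).
  assert (Hr : 0 <= r <= R0) by (split; [apply Rabs_pos|auto]).
  assert (Hu1 : Rabs u < 1) by lra.
  assert (HQex : ex_series (fun k => b k * r ^ k)).
  { eapply ex_series_ext; [|apply (CV_disk_inside a u (inrad a u Hab Hu1))].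
    intros n; simpl. unfold b, r. rewrite Rabs_mult, RPow_abs. reflexivity. }
  assert (HP : Rabs (PSeries a u) <= Series (fun k => b k * r ^ k)).
  { unfold PSeries. eapply Rle_trans; [apply Series_Rabs|].
    - apply (CV_disk_inside a u (inrad a u Hab Hu1)).
    - right. apply Series_ext. intros n. unfold b, r. rewrite Rabs_mult, RPow_abs. reflexivity. }
  assert (Hrd : Rbar_lt (Rabs u) (CV_radius (PS_derive a))).
  { rewrite CV_radius_derive. apply inrad; auto. apply Hab. }
  assert (HQ'ex : ex_series (fun n => INR (S n) * b (S n) * r ^ n)).
  { eapply ex_series_ext; [|apply (CV_disk_inside _ u Hrd)].
    intros n; simpl. unfold b, r, PS_derive. rewrite !Rabs_mult, RPow_abs.
    rewrite (Rabs_pos_eq (INR _)) by apply pos_INR. reflexivity. }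
  assert (HP' : Rabs (PSeries (PS_derive a) u) <= Series (fun n => INR (S n) * b (S n) * r ^ n)).
  { unfold PSeries. eapply Rle_trans; [apply Series_Rabs|].
    - apply (CV_disk_inside _ u Hrd).
    - right. apply Series_ext. intros n. unfold b, r, PS_derive. rewrite !Rabs_mult, RPow_abs.
      rewrite (Rabs_pos_eq (INR _)) by apply pos_INR. reflexivity. }
  set (B := Series b). set (Q := Series (fun k => b k * r ^ k)).
  set (Q' := Series (fun n => INR (S n) * b (S n) * r ^ n)).
  assert (Hbex : ex_series b) by exact Hsum.
  assert (HdEx : ex_series (fun n => b n - b n * r ^ n)).
  { eapply ex_series_ext; [|apply (ex_series_minus _ _ Hbex HQex)]. intros n. reflexivity. }
  assert (HBQ : B - Q = Series (fun n => b (S n) * (1 - r ^ (S n)))).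
  { unfold B, Q. rewrite <- Series_minus by auto. rewrite Series_incr_1 by auto.
    simpl pow. replace (b 0%nat - b 0%nat * 1) with 0 by ring. rewrite Rplus_0_l.
    apply Series_ext. intros n. ring. }
  assert (Hb0 : forall n, 0 <= b n) by (intros; apply Rabs_pos).
  assert (HT1ex : ex_series (fun n => b (S n) * (1 - r ^ (S n)))).
  { eapply ex_series_ext; [|apply (proj1 (ex_series_incr_1 _) HdEx)]. intros n. simpl. ring. }
  assert (HB0 : B = b 0%nat + Series (fun n => b (S n))).
  { unfold B. apply Series_incr_1. auto. }
  assert (Hpos2 : (1 - r) * Series (fun n => b (S n)) <= Series (fun n => b (S n) * (1 - r ^ (S n)))).
  { rewrite Rmult_comm, <- Series_scal_r. apply Series_le.
    - intros n. pose proof (pow_le1 r n ltac:(lra)). pose proof (Hb0 (S n)). change (r ^ S n) with (r * r ^ n). split; [nra|]. assert (0 <= r * r ^ n <= r) by nra. apply Rmult_le_compat_l; lra.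
    - auto. }
  assert (Hb0lt : b 0%nat < 1) by (unfold b; specialize (Ha 0%nat); apply Rabs_def1; lra).
  split.
  { assert (0 < (1 - r) * (1 - b 0%nat)) by (apply Rmult_lt_0_compat; lra).
    assert (0 <= Series (fun n => b (S n))) by (pose proof (series_ge_term (fun n => b (S n)) 0 (fun n => Hb0 (S n)) (proj1 (ex_series_incr_1 _) Hbex)); pose proof (Hb0 1%nat); simpl in *; lra).
    assert (HB1 : B <= 1) by exact Hle.
    assert (r * Series (fun n => b (S n)) <= r * (1 - b 0%nat)) by (apply Rmult_le_compat_l; lra).
    assert ((1 - r) * Series (fun n => b (S n)) = Series (fun n => b (S n)) - r * Series (fun n => b (S n))) by ring.
    assert ((1 - r) * (1 - b 0%nat) = 1 - b 0%nat - r * (1 - b 0%nat)) by ring.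
    unfold Q, B in *. lra. }
  set (e := fun n => b (S n) * (1 - r ^ (S n)) - INR (S n) * b (S n) * r ^ n * (1 - r)).
  assert (HeEx : ex_series e).
  { eapply ex_series_ext; [|apply (ex_series_minus _ _ HT1ex (ex_series_scal_r (1 - r) _ HQ'ex))].
    intros n. reflexivity. }
  assert (He : Series e = Series (fun n => b (S n) * (1 - r ^ (S n))) - Q' * (1 - r)).
  { unfold e, Q'. rewrite <- Series_scal_r. apply Series_minus; auto. apply ex_series_scal_r; auto. }
  assert (He0 : forall n, 0 <= e n).
  { intros n. unfold e. pose proof (gap_term r n ltac:(lra)) as [G _].
    pose proof (Hb0 (S n)). nra. }
  assert (Hem : Rabs (a m) * (1 - R0) ^ 2 <= e (pred m)).
  { unfold e. replace (S (pred m)) with m by lia.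
    pose proof (gap_term r (pred m) ltac:(lra)) as [_ G]. specialize (G ltac:(lia)).
    replace (S (pred m)) with m in G by lia.
    assert ((1 - R0) ^ 2 <= (1 - r) ^ 2) by (simpl; nra).
    pose proof (Hb0 m). unfold b. unfold b in H0.
    nra. }
  pose proof (series_ge_term e (pred m) He0 HeEx).
  assert (0 <= 1 - r) by lra.
  assert (Rabs (PSeries (PS_derive a) u) * (1 - r) <= Q' * (1 - r)) by (apply Rmult_le_compat_r; auto).
  assert (HB1 : B <= 1) by exact Hle. fold r. clearbody e. unfold Q, Q', B in *. lra.
Qed.

End KIsec.

Lemma abs_lt (x r : R) : Rabs x < r -> -r < x < r.
Proof. intros H. apply Rabs_def2 in H. lra. Qed.

Lemma mono_of_deriv (f df : R -> R) (y x : R) : y <= x ->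
  (forall s, y <= s <= x -> is_derive f s (df s)) ->
  (forall s, y <= s <= x -> 0 <= df s) -> f y <= f x.
Proof.
  intros Hyx Hd Hpos.
  destruct (MVT_gen f y x df) as [c0 [Hc Heq]].
  - intros s Hs. rewrite Rmin_left, Rmax_right in Hs by lra. apply Hd. lra.
  - intros s Hs. rewrite Rmin_left, Rmax_right in Hs by lra.
    apply derivable_continuous_pt. exists (df s). apply is_derive_Reals. apply Hd. lra.
  - rewrite Rmin_left, Rmax_right in Hc by lra.
    assert (0 <= df c0 * (x - y)) by (apply Rmult_le_pos; [apply Hpos; lra| lra]). lra.
Qed.

Lemma Dm_lip (x y : R) : -1 < y -> y <= x -> x < 1 -> x - y <= Dm x - Dm y.
Proof.
  intros H1 H2 H3.
  assert (Dm y - y <= Dm x - x).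
  { apply (mono_of_deriv (fun s => Dm s - s) (fun s => / (1 - Rabs s) - 1) y x H2).
    - intros s Hs. apply (is_derive_minus Dm (fun s => s) s (/ (1 - Rabs s)) 1).
      + apply Dm_deriv. lra.
      + auto_derive; [exact I| ring].
    - intros s Hs. assert (Rabs s < 1) by (apply Rabs_def1; lra).
      assert (1 <= / (1 - Rabs s)).
      { rewrite <- Rinv_1. apply Rinv_le_contravar; [lra|]. pose proof (Rabs_pos s). lra. }
      lra. }
  lra.
Qed.

Lemma Dm_lip_abs (x y : R) : -1 < x < 1 -> -1 < y < 1 -> Rabs (x - y) <= Rabs (Dm x - Dm y).
Proof.
  intros Hx Hy. destruct (Rle_dec y x).
  - pose proof (Dm_lip x y ltac:(lra) r ltac:(lra)).
    rewrite !Rabs_pos_eq; lra.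
  - pose proof (Dm_lip y x ltac:(lra) ltac:(lra) ltac:(lra)).
    rewrite (Rabs_minus_sym x y), (Rabs_minus_sym (Dm x)). rewrite !Rabs_pos_eq; lra.
Qed.

Section Contr.
Variable a : nat -> R.
Hypothesis Ha : forall i, -1 < a i < 1.
Hypothesis Hsum : ex_series (fun i => Rabs (a i)).
Hypothesis Hle : Series (fun i => Rabs (a i)) <= 1.

Lemma p_in (u : R) : -1 < u < 1 -> -1 < PSeries a u < 1.
Proof.
  intros Hu. assert (Rabs u < 1) by (apply Rabs_def1; lra).
  destruct (KI a Ha Hsum Hle u (Rabs u) 2 ltac:(lia) ltac:(lra) H) as [K _].
  apply abs_lt. lra.
Qed.

Lemma dp_bound (R0 c : R) (m : nat) (s : R) : (2 <= m)%nat -> R0 < 1 ->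
  0 <= c <= Rabs (a m) * (1 - R0) ^ 2 -> Rabs s <= R0 ->
  Rabs (PSeries (PS_derive a) s) * / (1 - Rabs (PSeries a s)) <= (1 - c) * / (1 - Rabs s).
Proof.
  intros Hm HR Hc Hs.
  destruct (KI a Ha Hsum Hle s R0 m Hm Hs HR) as [K1 K2].
  set (M := 1 - Rabs (PSeries a s)) in *.
  set (P' := Rabs (PSeries (PS_derive a) s)) in *.
  assert (HM1 : M <= 1) by (unfold M; pose proof (Rabs_pos (PSeries a s)); lra).
  assert (Hs1 : 0 < 1 - Rabs s) by lra.
  assert (HP'0 : 0 <= P') by apply Rabs_pos.
  assert (Hk : P' * (1 - Rabs s) <= (1 - c) * M).
  { assert (c * M <= c) by (rewrite <- (Rmult_1_r c) at 2; apply Rmult_le_compat_l; lra). nra. }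
  assert (HX : M * / M = 1) by (field; lra).
  assert (HY : (1 - Rabs s) * / (1 - Rabs s) = 1) by (field; lra).
  assert (HX0 : 0 < / M) by (apply Rinv_0_lt_compat; lra).
  assert (HY0 : 0 < / (1 - Rabs s)) by (apply Rinv_0_lt_compat; lra).
  replace (P' * / M) with ((P' * (1 - Rabs s)) * (/ M * / (1 - Rabs s))) by (field; lra).
  replace ((1 - c) * / (1 - Rabs s)) with (((1 - c) * M) * (/ M * / (1 - Rabs s))) by (field; lra).
  apply Rmult_le_compat_r; [|auto]. apply Rmult_le_pos; lra.
Qed.

Lemma contr (R0 c : R) (m : nat) : (2 <= m)%nat -> 0 <= R0 < 1 ->
  0 <= c <= Rabs (a m) * (1 - R0) ^ 2 ->
  forall x y, Rabs x <= R0 -> Rabs y <= R0 ->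
  Rabs (Dm (PSeries a x) - Dm (PSeries a y)) <= (1 - c) * Rabs (Dm x - Dm y).
Proof.
  intros Hm HR Hc.
  assert (Hc1 : c < 1).
  { assert (Rabs (a m) < 1) by (apply Rabs_def1; apply Ha).
    assert ((1 - R0) ^ 2 <= 1) by (simpl; nra).
    assert (Rabs (a m) * (1 - R0) ^ 2 < 1).
    { apply Rle_lt_trans with (Rabs (a m) * 1); [apply Rmult_le_compat_l; [apply Rabs_pos|auto]|lra]. }
    lra. }
  assert (Hgen : forall x y, y <= x -> Rabs x <= R0 -> Rabs y <= R0 ->
    Rabs (Dm (PSeries a x) - Dm (PSeries a y)) <= (1 - c) * Rabs (Dm x - Dm y)).
  { intros x y Hyx Hx Hy.
    assert (Hin : forall s, y <= s <= x -> Rabs s <= R0).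
    { intros s Hs. apply Rabs_le. apply Rabs_le_between in Hx. apply Rabs_le_between in Hy. lra. }
    assert (Hder : forall s, y <= s <= x -> is_derive (fun t => Dm (PSeries a t)) s
                    (PSeries (PS_derive a) s * / (1 - Rabs (PSeries a s)))).
    { intros s Hs. pose proof (Hin s Hs) as Hs'.
      assert (-1 < s < 1) by (apply abs_lt; lra).
      apply (is_derive_comp Dm (PSeries a) s).
      - apply Dm_deriv. apply p_in. auto.
      - apply is_derive_PSeries. apply inrad; [apply Hab; auto| lra]. }
    assert (HDder : forall s, y <= s <= x -> is_derive Dm s (/ (1 - Rabs s))).
    { intros s Hs. apply Dm_deriv. pose proof (Hin s Hs). apply abs_lt. lra. }
    assert (G1 : (1 - c) * Dm y - Dm (PSeries a y) <= (1 - c) * Dm x - Dm (PSeries a x)).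
    { apply (mono_of_deriv (fun t => (1 - c) * Dm t - Dm (PSeries a t))
        (fun s => (1 - c) * / (1 - Rabs s) - PSeries (PS_derive a) s * / (1 - Rabs (PSeries a s))) y x Hyx).
      - intros s Hs. apply (is_derive_minus (fun t => (1 - c) * Dm t) (fun t => Dm (PSeries a t))).
        + apply is_derive_scal. auto.
        + auto.
      - intros s Hs. pose proof (dp_bound R0 c m s Hm ltac:(lra) Hc (Hin s Hs)).
        pose proof (Rle_abs (PSeries (PS_derive a) s)).
        assert (0 < 1 - Rabs (PSeries a s)).
        { destruct (KI a Ha Hsum Hle s R0 m Hm (Hin s Hs) ltac:(lra)). auto. }
        assert (0 < / (1 - Rabs (PSeries a s))) by (apply Rinv_0_lt_compat; lra).
        assert (PSeries (PS_derive a) s * / (1 - Rabs (PSeries a s)) <= Rabs (PSeries (PS_derive a) s) * / (1 - Rabs (PSeries a s))) by (apply Rmult_le_compat_r; lra).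
        lra. }
    assert (G2 : (1 - c) * Dm y + Dm (PSeries a y) <= (1 - c) * Dm x + Dm (PSeries a x)).
    { apply (mono_of_deriv (fun t => (1 - c) * Dm t + Dm (PSeries a t))
        (fun s => (1 - c) * / (1 - Rabs s) + PSeries (PS_derive a) s * / (1 - Rabs (PSeries a s))) y x Hyx).
      - intros s Hs. apply (is_derive_plus (fun t => (1 - c) * Dm t) (fun t => Dm (PSeries a t))).
        + apply is_derive_scal. auto.
        + auto.
      - intros s Hs. pose proof (dp_bound R0 c m s Hm ltac:(lra) Hc (Hin s Hs)).
        pose proof (Rle_abs (- PSeries (PS_derive a) s)). rewrite Rabs_Ropp in H0.
        assert (0 < 1 - Rabs (PSeries a s)).
        { destruct (KI a Ha Hsum Hle s R0 m Hm (Hin s Hs) ltac:(lra)). auto. }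
        assert (0 < / (1 - Rabs (PSeries a s))) by (apply Rinv_0_lt_compat; lra).
        assert (- PSeries (PS_derive a) s * / (1 - Rabs (PSeries a s)) <= Rabs (PSeries (PS_derive a) s) * / (1 - Rabs (PSeries a s))) by (apply Rmult_le_compat_r; lra).
        lra. }
    assert (Hd : 0 <= Dm x - Dm y).
    { assert (0 <= (1 - c) * (Dm x - Dm y)) by lra.
      destruct (Rle_dec 0 (Dm x - Dm y)); auto.
      assert ((1 - c) * (Dm x - Dm y) < 0) by (apply Rmult_pos_neg; lra). lra. }
    rewrite (Rabs_pos_eq (Dm x - Dm y)) by auto.
    apply Rabs_le. lra. }
  intros x y Hx Hy. destruct (Rle_dec y x).
  - apply Hgen; auto.
  - rewrite Rabs_minus_sym, (Rabs_minus_sym (Dm x)). apply Hgen; auto; lra.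
Qed.

End Contr.

Lemma exp_le_mono (x y : R) : x <= y -> exp x <= exp y.
Proof. intros H. destruct (Rle_lt_or_eq_dec _ _ H). left; apply exp_increasing; auto. subst; lra. Qed.

Lemma one_minus_abs (u : R) : -1 < u < 1 -> 1 - Rabs u = exp (- Rabs (Dm u)).
Proof.
  intros Hu. rewrite Dm_abs by auto. rewrite Ropp_involutive, exp_ln; auto.
  assert (Rabs u < 1) by (apply Rabs_def1; lra). lra.
Qed.

Lemma Dm_bound_abs (u K : R) : -1 < u < 1 -> Rabs (Dm u) <= K -> Rabs u <= 1 - exp (- K).
Proof.
  intros Hu HK. pose proof (one_minus_abs u Hu). pose proof (exp_le_mono (-K) (- Rabs (Dm u)) ltac:(lra)). lra.
Qed.

Lemma Dm_pos_of (u : R) : 0 < u < 1 -> 0 < Dm u.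
Proof. intros H. unfold Dm. destruct (Rle_dec 0 u); [|lra]. pose proof (mln_bounds u ltac:(lra)). lra. Qed.

Lemma Dm_neg_of (u : R) : -1 < u < 0 -> Dm u < 0.
Proof. intros H. unfold Dm. destruct (Rle_dec 0 u); [lra|]. pose proof (mln_bounds (-u) ltac:(lra)).
  replace (1 - - u) with (1 + u) in H0 by ring. lra. Qed.

Section Main.
Variable a : nat -> R.
Hypothesis Ha : forall i, -1 < a i < 1.
Hypothesis Hsum : ex_series (fun i => Rabs (a i)).
Hypothesis Hle : Series (fun i => Rabs (a i)) <= 1.

Lemma iter_in (x : R) : -1 < x < 1 -> forall n, -1 < piter a n x < 1.
Proof. intros Hx n. induction n; [simpl; auto|]. change (piter a (S n) x) with (PSeries a (piter a n x)). apply p_in; auto. Qed.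

Lemma glob (x y : R) : -1 < x < 1 -> -1 < y < 1 -> forall n,
  Rabs (Dm (piter a n x) - Dm (piter a n y)) <= Rabs (Dm x - Dm y).
Proof.
  intros Hx Hy n. induction n; [simpl; lra|].
  change (piter a (S n) x) with (PSeries a (piter a n x)).
  change (piter a (S n) y) with (PSeries a (piter a n y)).
  pose proof (iter_in x Hx n) as Ix. pose proof (iter_in y Hy n) as Iy.
  assert (Hx1 : Rabs (piter a n x) < 1) by (apply Rabs_def1; lra).
  assert (Hy1 : Rabs (piter a n y) < 1) by (apply Rabs_def1; lra).
  set (R0 := Rmax (Rabs (piter a n x)) (Rabs (piter a n y))).
  assert (HR0 : 0 <= R0 < 1).
  { unfold R0. split. apply Rle_trans with (Rabs (piter a n x)); [apply Rabs_pos|apply Rmax_l].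
    apply Rmax_lub_lt; auto. }
  pose proof (contr a Ha Hsum Hle R0 0 2 ltac:(lia) HR0) as Hc.
  assert (0 <= 0 <= Rabs (a 2%nat) * (1 - R0) ^ 2).
  { split; [lra|]. apply Rmult_le_pos; [apply Rabs_pos| simpl; nra]. }
  specialize (Hc H (piter a n x) (piter a n y) (Rmax_l _ _) (Rmax_r _ _)).
  lra.
Qed.

Lemma affine_p (u : R) : (forall k, (2 <= k)%nat -> a k = 0) -> -1 < u < 1 ->
  PSeries a u = a 0%nat + a 1%nat * u.
Proof.
  intros Haff Hu. assert (Hu1 : Rabs u < 1) by (apply Rabs_def1; lra).
  unfold PSeries.
  assert (Hex : ex_series (fun k => a k * u ^ k)).
  { apply ex_series_Rabs. apply (CV_disk_inside a u). apply inrad; auto. apply Hab; auto. }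
  rewrite Series_incr_1 by auto.
  rewrite Series_incr_1 by (apply (proj1 (ex_series_incr_1 _)) in Hex; auto).
  assert (Hz : Series (fun k => a (S (S k)) * u ^ S (S k)) = 0).
  { transitivity (Series (fun n : nat => 0 * (fun _ : nat => 1) n)).
    - apply Series_ext. intros n. rewrite Haff by lia. ring.
    - rewrite (Series_scal_l 0 (fun _ => 1)). ring. }
  rewrite Hz. simpl. ring.
Qed.

End Main.

Theorem corollary3 (a : nat -> R) (lim0 : R)
  (Ha : forall i, -1 < a i < 1)
  (Hsum : ex_series (fun i => Rabs (a i)))
  (Hle : Series (fun i => Rabs (a i)) <= 1)
  (Hlim : is_lim_seq (fun n => piter a (S n) 0) lim0) :
  forall t, -1 < t < 1 -> is_lim_seq (fun n => piter a (S n) t) lim0.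
Proof.
  intros t Ht.
  assert (H0 : -1 < 0 < 1) by lra.
  set (C := Rabs (Dm t - Dm 0)).
  assert (HC0 : 0 <= C) by apply Rabs_pos.
  pose proof (glob a Ha Hsum Hle t 0 Ht H0) as Hg. fold C in Hg.
  pose proof (iter_in a Ha Hsum Hle t Ht) as Iz.
  pose proof (iter_in a Ha Hsum Hle 0 H0) as Iw.
  assert (Hl1 : Rabs lim0 <= 1).
  { pose proof (is_lim_seq_abs _ _ Hlim) as Ha'. simpl in Ha'.
    assert (Hle1 : forall n, Rabs (piter a (S n) 0) <= 1).
    { intros n. specialize (Iw (S n)). apply Rabs_le. lra. }
    pose proof (is_lim_seq_le _ _ _ _ Hle1 Ha' (is_lim_seq_const 1)). simpl in H. auto. }
  assert (Hred : is_lim_seq (fun n => piter a (S n) t - piter a (S n) 0) 0 ->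
                 is_lim_seq (fun n => piter a (S n) t) lim0).
  { intros Hd. pose proof (is_lim_seq_plus' _ _ _ _ Hd Hlim) as Hp.
    replace lim0 with (0 + lim0) by ring.
    eapply is_lim_seq_ext; [|exact Hp]. intros n. simpl. ring. }
  destruct (Rle_lt_or_eq_dec _ _ Hl1) as [Hlt | Heq].
  2:{
    apply is_lim_seq_spec. intros eps.
    assert (He' : 0 < Rmin 1 eps * exp (- C)).
    { apply Rmult_lt_0_compat; [apply Rmin_pos; [lra| apply cond_pos]| apply exp_pos]. }
    destruct (proj2 (is_lim_seq_spec _ _) Hlim (mkposreal _ He')) as [N HN].
    exists N. intros n Hn. specialize (HN n Hn).
    change (pos (mkposreal _ He')) with (Rmin 1 eps * exp (- C)) in HN.
    set (wv := piter a (S n) 0) in *. set (zv := piter a (S n) t) in *.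
    pose proof (Iw (S n)) as Iwv. pose proof (Iz (S n)) as Izv.
    fold wv in Iwv. fold zv in Izv. specialize (Hg (S n)). fold wv zv in Hg.
    assert (HminE : Rmin 1 eps <= 1) by apply Rmin_l.
    assert (HminE2 : Rmin 1 eps <= eps) by apply Rmin_r.
    assert (Hexp : 0 < exp (- C)) by apply exp_pos.
    assert (Hexp1 : exp (- C) <= 1) by (pose proof (exp_le_mono (- C) 0 ltac:(lra)); rewrite exp_0 in *; lra).
    assert (He'1 : Rmin 1 eps * exp (- C) <= 1).
    { apply Rle_trans with (1 * 1); [|lra]. apply Rmult_le_compat; try lra. pose proof (Rmin_pos 1 eps ltac:(lra) (cond_pos eps)); lra. }
    assert (Hw1 : 1 - Rabs wv < Rmin 1 eps * exp (- C)).
    { pose proof (Rabs_triang_inv lim0 wv). rewrite Rabs_minus_sym in HN. lra. }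
    assert (HwC : C < Rabs (Dm wv)).
    { rewrite Dm_abs by auto.
      assert (1 - Rabs wv < exp (- C)).
      { apply Rlt_le_trans with (1 := Hw1). rewrite <- (Rmult_1_l (exp (- C))) at 2.
        apply Rmult_le_compat_r; lra. }
      assert (Hpw : 0 < 1 - Rabs wv) by (assert (Rabs wv < 1) by (apply Rabs_def1; lra); lra).
      pose proof (ln_increasing _ _ Hpw H) as Hln. rewrite ln_exp in Hln. lra. }
    assert (HzD : Rabs (Dm wv) - C <= Rabs (Dm zv)).
    { pose proof (Rabs_triang_inv (Dm wv) (Dm zv)). rewrite Rabs_minus_sym in Hg. lra. }
    assert (Hz1 : 1 - Rabs zv < eps).
    { rewrite (one_minus_abs zv Izv).
      apply Rle_lt_trans with (exp (C - Rabs (Dm wv))).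
      { apply exp_le_mono. lra. }
      assert (Hee : exp (C - Rabs (Dm wv)) = exp C * (1 - Rabs wv)).
      { rewrite (one_minus_abs wv Iwv). unfold Rminus. apply exp_plus. }
      rewrite Hee.
      assert (exp C * (1 - Rabs wv) < exp C * (Rmin 1 eps * exp (- C))).
      { apply Rmult_lt_compat_l; [apply exp_pos| auto]. }
      replace (exp C * (Rmin 1 eps * exp (- C))) with (Rmin 1 eps * (exp C * exp (- C))) in H by ring.
      rewrite <- exp_plus, Rplus_opp_r, exp_0 in H. lra. }
    destruct (Rcase_abs lim0) as [Hneg | Hpos].
    - rewrite Rabs_left in Heq by auto. assert (lim0 = -1) by lra. subst lim0.
      assert (wv < 0).
      { rewrite Rabs_minus_sym in HN. pose proof (Rabs_def2 _ _ HN). lra. }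
      pose proof (Dm_neg_of wv ltac:(lra)).
      rewrite Rabs_left in HwC by auto.
      assert (Dm zv < 0) by (apply Rabs_le_between in Hg; lra).
      pose proof (Dm_neg zv Izv H2).
      rewrite Rabs_left in Hz1 by auto. rewrite Rabs_pos_eq by lra. lra.
    - rewrite Rabs_pos_eq in Heq by lra. subst lim0.
      assert (0 < wv).
      { rewrite Rabs_minus_sym in HN. pose proof (Rabs_def2 _ _ HN). lra. }
      pose proof (Dm_pos_of wv ltac:(lra)).
      rewrite Rabs_pos_eq in HwC by lra.
      assert (0 < Dm zv) by (apply Rabs_le_between in Hg; lra).
      pose proof (Dm_pos zv Izv H2).
      rewrite Rabs_pos_eq in Hz1 by lra. rewrite Rabs_left1 by lra. lra. }
  apply Hred.
  destruct (classic (exists m, (2 <= m)%nat /\ a m <> 0)) as [[m [Hm Ham]] | Hno].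
  2:{
    assert (Haff : forall k, (2 <= k)%nat -> a k = 0).
    { intros k Hk. destruct (Req_dec (a k) 0); auto. exfalso; apply Hno; eauto. }
    assert (Hdiff : forall n, piter a n t - piter a n 0 = a 1%nat ^ n * t).
    { induction n; [simpl; ring|].
      change (piter a (S n) t) with (PSeries a (piter a n t)).
      change (piter a (S n) 0) with (PSeries a (piter a n 0)).
      rewrite !(affine_p a Ha) by auto. simpl pow. transitivity (a 1%nat * (piter a n t - piter a n 0)); [ring|]. rewrite IHn. ring. }
    eapply is_lim_seq_ext; [intros n; symmetry; apply Hdiff|].
    replace (Finite 0) with (Rbar_mult (Finite 0) t) by (simpl; f_equal; ring).
    apply is_lim_seq_scal_r.
    apply (is_lim_seq_incr_1 (fun n => a 1%nat ^ n)). apply is_lim_seq_geom.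
    apply Rabs_def1; apply Ha. }
  set (e1 := (1 - Rabs lim0) / 2).
  assert (He1 : 0 < e1) by (unfold e1; lra).
  destruct (proj2 (is_lim_seq_spec _ _) Hlim (mkposreal _ He1)) as [N HN].
  change (pos (mkposreal _ He1)) with e1 in HN.
  set (R1 := (1 + Rabs lim0) / 2).
  assert (HR1 : 0 <= R1 < 1) by (unfold R1; pose proof (Rabs_pos lim0); lra).
  set (K := - ln (1 - R1) + C).
  assert (HK0 : 0 <= K) by (unfold K; pose proof (mln_bounds R1 HR1); lra).
  set (R := 1 - exp (- K)).
  assert (HR : 0 <= R < 1).
  { unfold R. split; [|pose proof (exp_pos (-K)); lra].
    pose proof (exp_le_mono (-K) 0 ltac:(lra)). rewrite exp_0 in H. lra. }
  assert (Hbd : forall n, (N <= n)%nat -> Rabs (piter a (S n) t) <= R /\ Rabs (piter a (S n) 0) <= R).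
  { intros n Hn. specialize (HN n Hn).
    pose proof (Iw (S n)) as Iwv. pose proof (Iz (S n)) as Izv.
    assert (Hw : Rabs (piter a (S n) 0) <= R1).
    { pose proof (Rabs_triang_inv (piter a (S n) 0) lim0). unfold e1, R1 in *. lra. }
    assert (HDw : Rabs (Dm (piter a (S n) 0)) <= - ln (1 - R1)).
    { rewrite Dm_abs by auto. apply Ropp_le_contravar. apply ln_le; lra. }
    specialize (Hg (S n)).
    assert (HDz : Rabs (Dm (piter a (S n) t)) <= K).
    { pose proof (Rabs_triang_inv (Dm (piter a (S n) t)) (Dm (piter a (S n) 0))). unfold K. lra. }
    split; apply Dm_bound_abs; auto. unfold K; lra. }
  set (c := Rabs (a m) * (1 - R) ^ 2).
  assert (Hc0 : 0 < c).
  { unfold c. apply Rmult_lt_0_compat; [apply Rabs_pos_lt; auto|]. simpl. nra. }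
  assert (Hc1 : c < 1).
  { assert (Rabs (a m) < 1) by (apply Rabs_def1; apply Ha).
    assert ((1 - R) ^ 2 <= 1) by (simpl; nra).
    unfold c. apply Rle_lt_trans with (Rabs (a m) * 1); [apply Rmult_le_compat_l; [apply Rabs_pos|auto]|lra]. }
  set (d := fun n => Rabs (Dm (piter a n t) - Dm (piter a n 0))).
  assert (Hdk : forall k, d (S N + k)%nat <= (1 - c) ^ k * C).
  { induction k.
    - simpl. rewrite Nat.add_0_r. unfold d. specialize (Hg (S N)). lra.
    - replace (S N + S k)%nat with (S (S N + k)) by lia.
      unfold d. change (piter a (S (S N + k)) t) with (PSeries a (piter a (S N + k) t)).
      change (piter a (S (S N + k)) 0) with (PSeries a (piter a (S N + k) 0)).
      destruct (Hbd (N + k)%nat ltac:(lia)) as [B1 B2].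
      pose proof (contr a Ha Hsum Hle R c m Hm HR (conj (Rlt_le _ _ Hc0) (Rle_refl c)) _ _ B1 B2).
      fold (d (S N + k)%nat) in H. simpl pow.
      assert (0 <= 1 - c) by lra.
      apply Rle_trans with ((1 - c) * d (S N + k)%nat); auto.
      rewrite Rmult_assoc. apply Rmult_le_compat_l; auto. }
  apply (is_lim_seq_incr_n _ N).
  apply is_lim_seq_le_le with (u := fun k => - ((1 - c) ^ k * C)) (w := fun k => (1 - c) ^ k * C).
  - intros k. rewrite (Nat.add_comm k N). change (S (N + k)) with (S N + k)%nat. specialize (Hdk k). unfold d in Hdk.
    pose proof (Dm_lip_abs _ _ (Iz (S N + k)%nat) (Iw (S N + k)%nat)).
    apply Rabs_le_between. lra.
  - replace (Finite 0) with (Rbar_opp (Rbar_mult (Finite 0) C)) by (simpl; f_equal; ring).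
    apply (is_lim_seq_opp (fun k => (1 - c) ^ k * C)). apply is_lim_seq_scal_r.
    apply is_lim_seq_geom. rewrite Rabs_pos_eq; lra.
  - replace (Finite 0) with (Rbar_mult (Finite 0) C) by (simpl; f_equal; ring).
    apply is_lim_seq_scal_r.
    apply is_lim_seq_geom. rewrite Rabs_pos_eq; lra.
Qed.
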